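(* Let $\mathbb Y$ be a real locally convex Hausdorff topological vector space with topological dual $\mathbb Y^\sharp$, and let $d:\mathbb Y\times\mathbb Y^\sharp\to\mathbb R$ be the duality bilinear form $d(y,y^\sharp)=\langle y,y^\sharp\rangle$. Let $\mathbb X,\mathbb X^\sharp$ be sets and $c:\mathbb X\times\mathbb X^\sharp\to\overline{\mathbb R}$ a coupling. Let $K:\mathbb X\times\mathbb Y\to\overline{\mathbb R}$, $f:\mathbb X\to\overline{\mathbb R}$, and $g:\mathbb Y\to\,]-\infty,+\infty]$. For $x^\sharp\in\mathbb X^\sharp$ let $K_{x^\sharp}(y)=\inf_{x\in\mathbb X}\big((-c(x,x^\sharp))\mathbin{\overset{\cdot}{+}} K(x,y)\big)$. Suppose that (i) $g$ is a proper convex function; (ii) for every $x^\sharp\in\mathbb X^\sharp$, $K_{x^\sharp}$ is a proper convex function; (iii) for every $x^\sharp\in\mathbb X^\sharp$, $g$ is continuous at some point where $K_{x^\sharp}$ is finite. Then: if $f(x)=\inf_{y\in\mathbb Y}\big(K(x,y)\mathbin{\overset{\cdot}{+}} g(y)\big)$ for all $x\in\mathbb X$, it follows that $f^{c}(x^\sharp)=\inf_{y^\sharp\in\mathbb Y^\sharp}\big(K^{c\mathbin{\underset{\cdot}{+}} d}(x^\sharp,y^\sharp)\mathbin{\overset{\cdot}{+}} g^{-d}(y^\sharp)\big)$ for all $x^\sharp\in\mathbb X^\sharp$.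
   Context: $\overline{\mathbb R}=[-\infty,+\infty]$. The Moreau lower addition $\mathbin{\underset{\cdot}{+}}$ is usual addition extended by $(+\infty)\mathbin{\underset{\cdot}{+}}(-\infty)=(-\infty)\mathbin{\underset{\cdot}{+}}(+\infty)=-\infty$; the Moreau upper addition $\mathbin{\overset{\cdot}{+}}$ is usual addition extended by $(+\infty)\mathbin{\overset{\cdot}{+}}(-\infty)=(-\infty)\mathbin{\overset{\cdot}{+}}(+\infty)=+\infty$. $f^{c}(x^\sharp)=\sup_{x}\big(c(x,x^\sharp)\mathbin{\underset{\cdot}{+}}(-f(x))\big)$; $g^{-d}(y^\sharp)=\sup_{y}\big((-\langle y,y^\sharp\rangle)\mathbin{\underset{\cdot}{+}}(-g(y))\big)$; $K^{c\mathbin{\underset{\cdot}{+}} d}(x^\sharp,y^\sharp)=\sup_{x\in\mathbb X,y\in\mathbb Y}\big(c(x,x^\sharp)\mathbin{\underset{\cdot}{+}}\langle y,y^\sharp\rangle\mathbin{\underset{\cdot}{+}}(-K(x,y))\big)$. A function is proper if it never takes the value $-\infty$ and is not identically $+\infty$. *)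

(* Defs.v *)
From HB Require Import structures.
From mathcomp Require Import all_boot all_order all_algebra.
From mathcomp Require Import all_classical all_reals all_analysis.
Set Implicit Arguments. Unset Strict Implicit. Unset Printing Implicit Defensive.
Import Order.TTheory GRing.Theory Num.Theory.
Local Open Scope classical_set_scope.
Local Open Scope ring_scope.
Local Open Scope ereal_scope.

(* In mathcomp-analysis, [x + y] on \bar R is the Moreau LOWER addition
   (+oo + -oo = -oo) and [(x + y)%dE] (dual_adde) is the Moreau UPPER addition
   (+oo + -oo)%dE = +oo). *)

Section Defs.
Variable R : realType.

(* convexity of an extended-real valued function on a real vector space,
   with the upper-addition convention (equivalent to convexity of the epigraph) *)
Definition econvex (Y : lmodType R) (h : Y -> \bar R) :=
  forall (y1 y2 : Y) (t : R), (0 < t < 1)%R ->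
    h (t *: y1 + (1 - t) *: y2)%R <= ((t%:E * h y1) + ((1 - t)%:E * h y2))%dE.

Definition eproper (T : Type) (h : T -> \bar R) :=
  (forall y, h y != -oo) /\ (exists y, h y != +oo).

Definition tdual (Y : tvsType R) : set {linear Y -> R^o} :=
  [set l | continuous (l : Y -> R^o)].

Definition Kxs (X Xs Y : Type) (c : X -> Xs -> \bar R) (K : X -> Y -> \bar R)
  (xs : Xs) (y : Y) : \bar R :=
  ereal_inf (range (fun x => ((- c x xs) + K x y)%dE)).

Definition cconj (X Xs : Type) (c : X -> Xs -> \bar R) (f : X -> \bar R)
  (xs : Xs) : \bar R :=
  ereal_sup (range (fun x => c x xs + - f x)).

Definition mdconj (Y : tvsType R) (g : Y -> \bar R) (ys : {linear Y -> R^o})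
  : \bar R :=
  ereal_sup (range (fun y => (- (ys y : R))%:E + - g y)).

Definition cdconj (X Xs : Type) (Y : tvsType R) (c : X -> Xs -> \bar R)
  (K : X -> Y -> \bar R) (xs : Xs) (ys : {linear Y -> R^o}) : \bar R :=
  ereal_sup (range (fun p : X * Y => c p.1 xs + (ys p.2 : R)%:E + - K p.1 p.2)).

End Defs.

Lemma lower_add_check (R : realType) : (+oo + -oo)%E = -oo :> \bar R.
Proof. by []. Qed.
Lemma upper_add_check (R : realType) : (+oo + -oo)%dE = +oo :> \bar R.
Proof. by []. Qed.

(* Main.v *)
Require Import Defs.
From HB Require Import structures.
From mathcomp Require Import all_boot all_order all_algebra.
From mathcomp Require Import all_classical all_reals all_analysis.
From mathcomp Require Import ring lra.
Import Order.TTheory GRing.Theory Num.Theory.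
Local Open Scope classical_set_scope.
Local Open Scope ring_scope.
Section HahnBanach.
Variables (R : realType) (V : lmodType R) (q : V -> R).
Hypothesis qD : forall u v, q (u + v) <= q u + q v.
Hypothesis qZ : forall (r : R) u, 0 < r -> q (r *: u) = r * q u.

Definition islin (G : set (V * R)) :=
 [/\ (forall y r r', G (y,r) -> G (y,r') -> r = r'),
     (forall a y1 r1 y2 r2, G (y1,r1) -> G (y2,r2) -> G (a *: y1 + y2, a * r1 + r2)) &
     (forall y r, G (y,r) -> r <= q y)].

Lemma q0 : q 0 = 0.
Proof.

move: (@qZ 2%:R 0 (ltr0Sn R 1)); rewrite scaler0 => h; lra.
Qed.

Lemma islin_chain (F : set (set (V * R))) :
  F `<=` islin -> total_on F subset -> islin (\bigcup_(X in F) X).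
Proof.
move=> FP tot.
have two p1 p2 : (\bigcup_(X in F) X) p1 -> (\bigcup_(X in F) X) p2 ->
    exists2 G, F G & G p1 /\ G p2.
  move=> [G1 FG1 G1p] [G2 FG2 G2p].
  have [s12|s21] := tot _ _ FG1 FG2.
    by exists G2 => //; split => //; exact: s12.
  by exists G1 => //; split => //; exact: s21.
split.
- move=> y r r' H1 H2; have [G FG [Gp1 Gp2]] := two _ _ H1 H2.
  by have [f _ _] := FP _ FG; exact: f Gp1 Gp2.
- move=> a y1 r1 y2 r2 H1 H2; have [G FG [Gp1 Gp2]] := two _ _ H1 H2.
  exists G => //; by have [_ l _] := FP _ FG; exact: l Gp1 Gp2.
- move=> y r [G FG Gp]; by have [_ _ d] := FP _ FG; exact: d Gp.
Qed.

Lemma hahn_banach_alg : exists psi : V -> R,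
  (forall a u v, psi (a *: u + v) = a * psi u + psi v) /\ forall u, psi u <= q u.
Proof.
have [G0 [[Gf Gl Gd] Gmax]] := Zorn_bigcup islin_chain.
have GN y r : G0 (y, r) -> G0 (0, 0).
  move=> Hy; have := Gl (-1) _ _ _ _ Hy Hy.
  by rewrite scaleN1r addNr mulN1r addNr.
have G00 : G0 (0, 0).
  apply: contrapT => N; apply: (Gmax [set (0 : V, 0 : R)]).
    split; last by move=> /(_ (0,0) erefl).
    by move=> [y r] /= H; exfalso; apply: N; exact: GN H.
  split.
  - by move=> y r r' [_ ->] [_ ->].
  - by move=> a y1 r1 y2 r2 [-> ->] [-> ->]; rewrite scaler0 addr0 mulr0 addr0.
  - by move=> y r [-> ->]; rewrite q0.
have GS a y r : G0 (y, r) -> G0 (a *: y, a * r).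
  by move=> H; have := Gl a _ _ _ _ H G00; rewrite !addr0.
have GA y1 r1 y2 r2 : G0 (y1, r1) -> G0 (y2, r2) -> G0 (y1 + y2, r1 + r2).
  by move=> H1 H2; have := Gl 1 _ _ _ _ H1 H2; rewrite scale1r mul1r.
have tot x : exists r, G0 (x, r).
  apply: contrapT => Hx.
  have Hx' r : ~ G0 (x, r) by move=> H; apply: Hx; exists r.
  pose E := [set z | exists d r, G0 (d, r) /\ z = r - q (d - x)].
  have bnd d r d' r' : G0 (d, r) -> G0 (d', r') -> r - q (d - x) <= q (d' + x) - r'.
    move=> H H'; have := Gd _ _ (GA _ _ _ _ H H').
    have := qD (d - x) (d' + x).
    have -> : d - x + (d' + x) = d + d' by rewrite addrACA addNr addr0.
    lra.
  have E0 : E !=set0 by exists (0 - q (0 - x)), 0, 0.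
  have Eub d' r' : G0 (d', r') -> ubound E (q (d' + x) - r').
    by move=> H' z [d [r [H ->]]]; exact: bnd H H'.
  have hsE : has_sup E by split => //; exists (q (0 + x) - 0); exact: Eub.
  pose c := sup E.
  pose G' := [set p | exists d r t, G0 (d, r) /\ p = (d + t *: x, r + t * c)].
  apply: (Gmax G'); last first.
    split.
    - move=> y r r' [d [r1 [t [H1 [-> ->]]]]] [d' [r2 [t' [H2 []]]]] E1 ->.
      have [tt'|ntt'] := eqVneq t t'.
        subst t'; have dd : d = d' by apply: (addIr (t *: x)).
        by subst d'; rewrite (Gf _ _ _ H1 H2).
      exfalso; apply: (Hx' ((t - t')^-1 * (r2 - r1))).
      have -> : x = (t - t')^-1 *: (d' - d).
        have -> : d' - d = (t - t') *: x.
          have -> : d' = d + (t *: x - t' *: x) by rewrite addrA E1 addrK.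
          by rewrite addrC addKr scalerBl.
        by rewrite scalerA mulVf ?scale1r // subr_eq0.
      apply: GS; have := Gl (-1) _ _ _ _ H1 H2.
      by rewrite scaleN1r mulN1r addrC [_ + - r1]addrC.
    - move=> a y1 r1 y2 r2 [d1 [s1 [t1 [H1 [-> ->]]]]] [d2 [s2 [t2 [H2 [-> ->]]]]].
      exists (a *: d1 + d2), (a * s1 + s2), (a * t1 + t2); split; first exact: Gl.
      congr (_, _); last by ring.
      by rewrite scalerDr scalerDl scalerA addrACA.
    - move=> y r [d [s [t [H [-> ->]]]]].
      have [tp|tn|<-] := ltgtP 0 t; last by rewrite scale0r mul0r !addr0; exact: Gd H.
      + have Hc : c <= q (t^-1 *: d + x) - t^-1 * s.
          by apply: ge_sup => //; apply: Eub; exact: GS.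
        have -> : d + t *: x = t *: (t^-1 *: d + x).
          by rewrite scalerDr scalerA mulfV ?gt_eqF // scale1r.
        rewrite qZ //.
        have : t * c <= t * (q (t^-1 *: d + x) - t^-1 * s) by rewrite ler_pM2l.
        rewrite mulrBr mulrA mulfV ?gt_eqF // mul1r; lra.
      + pose u := - t; have up : 0 < u by rewrite /u oppr_gt0.
        have Hc : (u^-1 * s) - q (u^-1 *: d - x) <= c.
          by apply: sup_upper_bound => //; exists (u^-1 *: d), (u^-1 * s); split => //; exact: GS.
        have -> : d + t *: x = u *: (u^-1 *: d - x).
          by rewrite scalerBr scalerA mulfV ?gt_eqF // scale1r /u scaleNr opprK.
        rewrite qZ //.
        have : u * (u^-1 * s - q (u^-1 *: d - x)) <= u * c by rewrite ler_pM2l.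
        rewrite mulrBr mulrA mulfV ?gt_eqF // mul1r /u; lra.
  split.
    by move=> [y r] H; exists y, r, 0; rewrite scale0r mul0r !addr0.
  move=> /(_ (x, c)) H; apply: (Hx' c); apply: H.
  by exists 0, 0, 1; rewrite scale1r mul1r !add0r.
have [psi Hpsi] := choice tot.
exists psi; split; last by move=> u; exact: Gd (Hpsi u).
move=> a u v; apply: (Gf _ _ _ (Hpsi _)); exact: Gl.
Qed.
End HahnBanach.
Section TvsHelpers.
Context {R : realType} {Y : tvsType R}.

Lemma absorb (W : set Y) (u : Y) : nbhs 0 W -> exists2 t : R, 0 < t & W (t *: u).
Proof.
move=> W0; have := @scale_continuous R Y (0, u) W.
rewrite /= scale0r => /(_ W0) [/= B [B1 B2] BU].
have [e e0 He] := (nbhs_ballP _ _).1 B1.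
exists (e / 2); first by rewrite divr_gt0.
apply: (BU (e / 2, u)); split => /=; last exact: nbhs_singleton.
apply: He; rewrite /ball /= sub0r normrN gtr0_norm ?divr_gt0 //.
by rewrite ltr_pdivrMr // ltr_pMr // ltr1n.
Qed.

Lemma lin_cont (psi : {linear Y -> R^o}) (W : set Y) (M : R) : nbhs 0 W ->
  (forall u, W u -> psi u <= M) -> continuous (psi : Y -> R^o).
Proof.
move=> W0 WM.
pose W2 := W `&` [set - w | w in W].
have W20 : nbhs 0 W2 by apply: filterI => //; exact: nbhs0N.
have W2M u : W2 u -> `|psi u| <= M.
  move=> [Wu [w Ww wu]]; rewrite ler_norml WM // andbT.
  by rewrite -wu raddfN lerN2; exact: WM.
have M0 : 0 <= M by apply: le_trans (W2M 0 (nbhs_singleton W20)).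
move=> x; apply/cvgrPdist_le => e e0.
pose k := e / (M + 1).
have k0 : 0 < k by rewrite divr_gt0 // ltr_wpDl.
have := nbhsT x (nbhs0Z (lt0r_neq0 k0) W20).
apply: filterS => _ [_ [w Ww <-] <-].
rewrite linearD linearZ /= opprD addrA subrr sub0r normrN normrM gtr0_norm //.
apply: le_trans (_ : k * M <= e).
  by rewrite ler_pM2l //; exact: W2M.
rewrite /k mulrAC ler_pdivrMr ?ltr_wpDl // ler_pM2l //; lra.
Qed.
End TvsHelpers.
Lemma econvex_le {R : realType} {Y' : lmodType R} {f : Y' -> \bar R} :
  econvex f -> forall {t : R} {y1 y2 : Y'} {r1 r2 : R}, 0 < t < 1 ->
  (f y1 <= r1%:E)%E -> (f y2 <= r2%:E)%E ->
  (f (t *: y1 + (1 - t) *: y2)%R <= (t * r1 + (1 - t) * r2)%:E)%E.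
Proof.
move=> fc t y1 y2 r1 r2 t01 h1 h2; apply: le_trans (fc _ _ _ t01) _.
have -> : ((t * r1 + (1 - t) * r2)%:E = ((t * r1)%:E + ((1 - t) * r2)%:E)%dE) by [].
move/andP: t01 => [t0 t1].
apply: DualAddTheoryRealDomain.lee_dD; rewrite EFinM; apply: lee_wpmul2l => //.
- by rewrite lee_fin ltW.
- by rewrite lee_fin subr_ge0 ltW.
Qed.

Section Core.
Context {R : realType} {Y : tvsType R}.
Variables (h g : Y -> \bar R) (a h0 g0 : R) (y0 : Y).
Hypotheses (hc : econvex h) (gc : econvex g) (hy0 : h y0 = h0%:E)
  (gy0 : g y0 = g0%:E) (gcont : {for y0, continuous g})
  (Ha : forall y rh rg, (h y <= rh%:E)%E -> (g y <= rg%:E)%E -> a <= rh + rg).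

Definition Sset (u : Y) : set R := [set e | exists t y z rh rg,
  [/\ 0 < t, y - z = t *: u, (h y <= rh%:E)%E, (g z <= rg%:E)%E &
      e = (rh + rg - a) / t]].

Let U := [set z | (g z < (g0 + 1)%:E)%E].
Let W := [set - w | w in [set - y0 + z | z in U]].

Let U_nbhs : nbhs y0 U.
Proof.
have H : nbhs (g y0) [set e | (e < (g0 + 1)%:E)%E].
  by rewrite gy0; apply: open_ereal_lt'; rewrite lte_fin ltrDl ltr01.
exact: gcont H.
Qed.

Let W_nbhs : nbhs 0 W.
Proof.
apply: nbhs0N; have := nbhsB (- y0) U_nbhs; by rewrite addNr.
Qed.

Let inW u : W u -> exists z, U z /\ y0 - z = u.
Proof.
move=> [_ [z Uz <-] <-]; exists z; split => //.
by rewrite opprD opprK addrC.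
Qed.

Let S_nonempty u : Sset u !=set0.
Proof.
have [t t0 /inW [z [Uz zE]]] := absorb W u W_nbhs.
exists ((h0 + (g0 + 1) - a) / t), t, y0, z, h0, (g0 + 1); split => //.
- by rewrite hy0.
- exact: ltW.
Qed.

Let Slow u e e' : Sset u e -> Sset (- u) e' -> 0 <= e + e'.
Proof.
move=> [t [y [z [rh [rg [t0 yz hy gz ->]]]]]].
move=> [s [y' [z' [rh' [rg' [s0 yz' hy' gz' ->]]]]]].
pose l := s / (t + s).
have ts0 : 0 < t + s by rewrite addr_gt0.
have l01 : 0 < l < 1.
  by rewrite divr_gt0 //= ltr_pdivrMr // mul1r ltrDr.
have lE : (1 - l) * s = l * t.
  by rewrite /l; field; rewrite lt0r_neq0.
have wE : l *: y + (1 - l) *: y' = l *: z + (1 - l) *: z'.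
  move/eqP: yz; rewrite subr_eq => /eqP ->.
  move/eqP: yz'; rewrite subr_eq => /eqP ->.
  rewrite !scalerDr !scalerA scalerN lE addrACA.
  by rewrite -(addrA (_ *: u)) (addrC (_ *: z)) addrA subrr add0r.
have h1 := econvex_le hc l01 hy hy'; rewrite wE in h1.
have key := Ha _ _ _ h1 (econvex_le gc l01 gz gz').
have key2 : 0 <= s * (rh + rg - a) + t * (rh' + rg' - a).
  have : 0 <= (t + s) * (l * (rh + rg - a) + (1 - l) * (rh' + rg' - a)).
    apply: mulr_ge0; first exact: ltW.
    have -> : l * (rh + rg - a) + (1 - l) * (rh' + rg' - a) =
      (l * rh + (1 - l) * rh' + (l * rg + (1 - l) * rg')) - a by ring.
    by rewrite subr_ge0.
  suff -> : (t + s) * (l * (rh + rg - a) + (1 - l) * (rh' + rg' - a)) =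
     s * (rh + rg - a) + t * (rh' + rg' - a) by [].
  by rewrite /l; field; rewrite lt0r_neq0.
have -> : (rh + rg - a) / t + (rh' + rg' - a) / s =
  (s * (rh + rg - a) + t * (rh' + rg' - a)) / (t * s).
  by field; rewrite !lt0r_neq0.
by apply: divr_ge0 => //; rewrite mulr_ge0 // ltW.
Qed.

Let S_lb u : has_lbound (Sset u).
Proof.
have [e' Se'] := S_nonempty (- u).
by exists (- e') => e Se; have := Slow _ _ _ Se Se'; lra.
Qed.

Let SD u1 u2 e1 e2 : Sset u1 e1 -> Sset u2 e2 -> Sset (u1 + u2) (e1 + e2).
Proof.
move=> [t1 [y1 [z1 [rh1 [rg1 [t10 yz1 hy1 gz1 ->]]]]]].
move=> [t2 [y2 [z2 [rh2 [rg2 [t20 yz2 hy2 gz2 ->]]]]]].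
pose l := t2 / (t1 + t2).
have ts0 : 0 < t1 + t2 by rewrite addr_gt0.
have l01 : 0 < l < 1.
  by rewrite divr_gt0 //= ltr_pdivrMr // mul1r ltrDr.
pose T := t1 * t2 / (t1 + t2).
exists T, (l *: y1 + (1 - l) *: y2), (l *: z1 + (1 - l) *: z2),
  (l * rh1 + (1 - l) * rh2), (l * rg1 + (1 - l) * rg2); split.
- by rewrite /T !divr_gt0 // mulr_gt0.
- rewrite opprD addrACA -!scalerBr yz1 yz2 !scalerA scalerDr.
  have -> : l * t1 = T by rewrite /l /T; field; rewrite lt0r_neq0.
  suff -> : (1 - l) * t2 = T by [].
  by rewrite /l /T; field; rewrite lt0r_neq0.
- exact: econvex_le.
- exact: econvex_le.
- by rewrite /l /T; field; rewrite !lt0r_neq0.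
Qed.

Let SZ r u e : 0 < r -> Sset u e -> Sset (r *: u) (r * e).
Proof.
move=> r0 [t [y [z [rh [rg [t0 yz hy gz ->]]]]]].
exists (t / r), y, z, rh, rg; split => //.
- by rewrite divr_gt0.
- by rewrite scalerA mulfVK // lt0r_neq0.
- by field; rewrite !lt0r_neq0.
Qed.

Let SZ' r u e : 0 < r -> Sset (r *: u) e -> Sset u (e / r).
Proof.
move=> r0 [t [y [z [rh [rg [t0 yz hy gz ->]]]]]].
exists (t * r), y, z, rh, rg; split => //.
- by rewrite mulr_gt0.
- by rewrite -scalerA.
- by field; rewrite !lt0r_neq0.
Qed.

Definition qf (u : Y) : R := inf (Sset u).

Let q_le u e : Sset u e -> qf u <= e.
Proof. by move=> Se; exact: ge_inf (S_lb u) _ Se. Qed.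

Let le_q u x : (forall e, Sset u e -> x <= e) -> x <= qf u.
Proof. by move=> H; apply: lb_le_inf => //; exact: S_nonempty. Qed.

Let qD u1 u2 : qf (u1 + u2) <= qf u1 + qf u2.
Proof.
have H1 e1 e2 : Sset u1 e1 -> Sset u2 e2 -> qf (u1 + u2) <= e1 + e2.
  by move=> S1 S2; exact: q_le _ _ (SD _ _ _ _ S1 S2).
have H2 e2 : Sset u2 e2 -> qf (u1 + u2) - e2 <= qf u1.
  by move=> S2; apply: le_q => e1 S1; have := H1 _ _ S1 S2; lra.
have : qf (u1 + u2) - qf u1 <= qf u2.
  by apply: le_q => e2 S2; have := H2 _ S2; lra.
lra.
Qed.

Let qZ (r : R) u : 0 < r -> qf (r *: u) = r * qf u.
Proof.
move=> r0; apply/eqP; rewrite eq_le; apply/andP; split.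
- have : qf (r *: u) / r <= qf u.
    apply: le_q => e Se; rewrite ler_pdivrMr // mulrC; exact: q_le _ _ (SZ _ _ _ r0 Se).
  by rewrite ler_pdivrMr // mulrC.
- apply: le_q => e Se; have := q_le _ _ (SZ' _ _ _ r0 Se).
  by rewrite ler_pdivlMr // mulrC.
Qed.

Lemma core_sep : exists l : {linear Y -> R^o}, continuous (l : Y -> R^o) /\
  forall y z rh rg, (h y <= rh%:E)%E -> (g z <= rg%:E)%E ->
    l y - l z <= rh + rg - a.
Proof.
have [psi [lin psiq]] := @hahn_banach_alg R Y qf qD qZ.
pose l : {linear Y -> R^o} := HB.pack psi (GRing.isLinear.Build R Y R^o *:%R psi lin).
exists l; split.
- apply: (@lin_cont R Y l W ((h0 + (g0 + 1) - a) / 1) W_nbhs) => u /inW [z [Uz zE]].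
  apply: le_trans (psiq u) _; apply: q_le.
  exists 1, y0, z, h0, (g0 + 1); split => //.
  + by rewrite scale1r.
  + by rewrite hy0.
  + exact: ltW.
- move=> y z rh rg hy gz; rewrite -raddfB /=.
  apply: le_trans (psiq _) _; rewrite -[X in _ <= X]divr1; apply: q_le.
  by exists 1, y, z, rh, rg; split => //; rewrite scale1r.
Qed.

End Core.
Section ERealHelpers.
Local Open Scope ereal_scope.
Context {R : realType}.
Implicit Types (a b x y : \bar R) (S : set \bar R).

Lemma le_adde_dadde x y : x + y <= (x + y)%dE.
Proof. by case: x => [x| |]; case: y => [y| |]; rewrite /dual_adde //=. Qed.

Lemma oppe_dadde x y : - (x + y)%dE = - x + - y.
Proof. by case: x => [x| |]; case: y => [y| |]; rewrite /dual_adde //= ?opprD. Qed.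

Lemma esupDl a S : a + ereal_sup S = ereal_sup [set a + s | s in S].
Proof.
apply/eqP; rewrite eq_le; apply/andP; split; last first.
  by apply: ge_ereal_sup => _ [s Ss <-]; apply: leeD2l; exact: ereal_sup_ubound.
case: a => [r| |].
- have K1 (r' : R) z : r'%:E + ((- r')%:E + z) = z.
    by case: z => [z| |] //=; rewrite -!EFinD addNKr.
  rewrite -[X in _ <= X](K1 r); apply: leeD2l.
  apply: ge_ereal_sup => s Ss; rewrite -[s](K1 (- r)%R) opprK; apply: leeD2l.
  by apply: ereal_sup_ubound; exists s.
- have [->|] := eqVneq (ereal_sup S) -oo; first by rewrite addeNy leNye.
  rewrite -ltNye => /ereal_sup_gt[s Ss sNy].
  have -> : ereal_sup [set +oo + s | s in S] = +oo.
    by apply: ereal_supy; exists s => //; case: s sNy {Ss}.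
  exact: leey.
- by rewrite leNye.
Qed.

Lemma esupDr a S : ereal_sup S + a = ereal_sup [set s + a | s in S].
Proof.
rewrite addeC esupDl; congr ereal_sup; apply: eq_imagel => s _; exact: addeC.
Qed.

Lemma esup_swap {I J : Type} (F : I -> J -> \bar R) :
  ereal_sup (range (fun i => ereal_sup (range (F i)))) =
  ereal_sup (range (fun j => ereal_sup (range (fun i => F i j)))).
Proof.
apply/eqP; rewrite eq_le; apply/andP; split.
- apply: ge_ereal_sup => _ [i _ <-]; apply: ge_ereal_sup => _ [j _ <-].
  apply: le_ereal_sup_tmp; exists (ereal_sup (range (fun i => F i j))); first by exists j.
  by apply: ereal_sup_ubound; exists i.
- apply: ge_ereal_sup => _ [j _ <-]; apply: ge_ereal_sup => _ [i _ <-].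
  apply: le_ereal_sup_tmp; exists (ereal_sup (range (F i))); first by exists i.
  by apply: ereal_sup_ubound; exists j.
Qed.

Lemma esup_pair {I J : Type} (F : I -> J -> \bar R) :
  ereal_sup (range (fun p : I * J => F p.1 p.2)) =
  ereal_sup (range (fun j => ereal_sup (range (fun i => F i j)))).
Proof.
apply/eqP; rewrite eq_le; apply/andP; split.
- apply: ge_ereal_sup => _ [[i j] _ <-] /=.
  apply: le_ereal_sup_tmp; exists (ereal_sup (range (fun i => F i j))); first by exists j.
  by apply: ereal_sup_ubound; exists i.
- apply: ge_ereal_sup => _ [j _ <-]; apply: ge_ereal_sup => _ [i _ <-].
  by apply: ereal_sup_ubound; exists (i, j).
Qed.

Lemma oppe_einf_range {T : Type} (f : T -> \bar R) :
  - ereal_inf (range f) = ereal_sup (range (fun t => - f t)).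
Proof. by rewrite -ereal_supN image_comp. Qed.

End ERealHelpers.
Local Open Scope ereal_scope.

Lemma sup_sum_le {R : realType} (A B : set \bar R) (c a0 b0 : R) :
  A a0%:E -> B b0%:E -> (forall x y, A x -> B y -> x + y <= c%:E) ->
  (ereal_sup A + ereal_sup B)%dE <= c%:E.
Proof.
move=> Aa0 Bb0 H.
have sAle : ereal_sup A <= (c - b0)%:E.
  apply: ge_ereal_sup => x Ax; have := H _ _ Ax Bb0.
  case: x {Ax} => [x| |] //=; rewrite ?leNye // lee_fin => Hx.
  by rewrite lee_fin; lra.
have sAge : a0%:E <= ereal_sup A by exact: ereal_sup_ubound.
case EA : (ereal_sup A) sAle sAge => [sa| |] //= _ _.
have sBle : ereal_sup B <= (c - sa)%:E.
  apply: ge_ereal_sup => y By; case: y By => [y| |] By //=; last by rewrite leNye.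
  - have : sa%:E <= (c - y)%:E.
      rewrite -EA; apply: ge_ereal_sup => x Ax; have := H _ _ Ax By.
      case: x {Ax} => [x| |] //=; rewrite ?leNye // !lee_fin => Hx; lra.
    rewrite !lee_fin; lra.
  - by have := H _ _ Aa0 By.
have sBge : b0%:E <= ereal_sup B by exact: ereal_sup_ubound.
case EB : (ereal_sup B) sBle sBge => [sb| |] //= sBle _.
by move: sBle; rewrite /dual_adde /= !lee_fin; lra.
Qed.

Lemma dadde_le_fin {R : realType} (x y : \bar R) (rx ry : R) :
  x <= rx%:E -> y <= ry%:E -> (x + y)%dE <= (rx + ry)%:E.
Proof.
move=> hx hy.
have -> : (rx + ry)%:E = (rx%:E + ry%:E)%dE by [].
exact: DualAddTheoryRealDomain.lee_dD.
Qed.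

Lemma esup_range_ext {R : realType} {T : Type} {F G : T -> \bar R} :
  (forall t, F t = G t) -> ereal_sup (range F) = ereal_sup (range G).
Proof. by move=> FG; rewrite (funext FG). Qed.
Theorem corollary3 (R : realType) (Y : tvsType R) (X Xs : Type)
  (c : X -> Xs -> \bar R) (K : X -> Y -> \bar R) (f : X -> \bar R)
  (g : Y -> \bar R) :
  hausdorff_space Y ->
  (forall y, g y != -oo) ->
  eproper g -> econvex g ->
  (forall xs, eproper (Kxs c K xs) /\ econvex (Kxs c K xs)) ->
  (forall xs, exists y0 : Y, Kxs c K xs y0 \is a fin_num /\
      g y0 \is a fin_num /\ {for y0, continuous g}) ->
  (forall x, f x = ereal_inf (range (fun y => (K x y + g y)%dE))) ->
  forall xs, cconj c f xs =
    ereal_inf [set (cdconj c K xs ys + mdconj g ys)%dE | ys in @tdual R Y].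
Proof.
move=> _ gN _ gC hPC hcont fE xs.
set h := Kxs c K xs.
have [[hN _] hC] := hPC xs.
have [y0 [hy0 [gy0 gc0]]] := hcont xs.
have E2 y : - h y = ereal_sup (range (fun x => c x xs + - K x y)).
  rewrite /h /Kxs oppe_einf_range; apply: esup_range_ext => x.
  by rewrite oppe_dadde oppeK.
have Step1 : cconj c f xs = - ereal_inf (range (fun y => (h y + g y)%dE)).
  have E1 x : c x xs + - f x =
      ereal_sup (range (fun y => c x xs + (- K x y + - g y))).
    rewrite fE oppe_einf_range esupDl image_comp /=.
    by apply: esup_range_ext => y /=; rewrite oppe_dadde.
  rewrite /cconj (esup_range_ext E1).
  rewrite oppe_einf_range esup_swap; apply: esup_range_ext => y /=.
  rewrite oppe_dadde E2 esupDr image_comp /=.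
  by apply: esup_range_ext => x /=; rewrite addeA.
have Step2 ys : cdconj c K xs ys =
    ereal_sup (range (fun y => (ys y)%:E + - h y)).
  rewrite /cdconj (esup_pair (fun x y => c x xs + (ys y)%:E + - K x y)).
  apply: esup_range_ext => y /=.
  rewrite E2 esupDl image_comp /=.
  by apply: esup_range_ext => x /=; rewrite addeCA addeA.
rewrite Step1.
have -> : [set (cdconj c K xs ys + mdconj g ys)%dE | ys in @tdual R Y] =
    [set (ereal_sup (range (fun y => (ys y)%:E + - h y)) + mdconj g ys)%dE
      | ys in @tdual R Y].
  by apply: eq_imagel => ys _; rewrite Step2.
set al := ereal_inf _.
apply/eqP; rewrite eq_le; apply/andP; split.
- apply: le_ereal_inf_tmp => _ [ys _ <-].
  rewrite /al oppe_einf_range; apply: ge_ereal_sup => _ [y _ <-].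
  rewrite oppe_dadde.
  have hNy : h y != -oo := hN y; move: hNy (gN y).
  case Eh : (h y) => [hr| |]; case Eg : (g y) => [gr| |] //= _ _; last first.
  all: try by rewrite leNye.
  apply: le_trans (le_adde_dadde _ _).
  have -> : (- hr)%:E + (- gr)%:E =
     ((ys y)%:E + - (hr%:E)) + ((- ys y)%:E + - (gr%:E)).
    by rewrite /= -!EFinD; congr EFin; ring.
  apply: leeD; apply: ereal_sup_ubound; exists y => //.
  + by rewrite Eh.
  + by rewrite Eg.
- have [h0 hy0'] : exists h0, h y0 = h0%:E by exists (fine (h y0)); rewrite fineK.
  have [g0 gy0'] : exists g0, g y0 = g0%:E by exists (fine (g y0)); rewrite fineK.
  have alle : al <= (h0 + g0)%:E.
    apply: le_trans (_ : al <= (h y0 + g y0)%dE) _.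
      by apply: ereal_inf_lbound; exists y0.
    by apply: dadde_le_fin; rewrite ?hy0' ?gy0'.
  case Eal : al alle => [a| |] //= _; last by rewrite leey.
  have Ha y rh rg : h y <= rh%:E -> g y <= rg%:E -> (a <= rh + rg)%R.
    move=> hy gy; rewrite -lee_fin -Eal /al.
    apply: le_trans (_ : _ <= (h y + g y)%dE) _.
      by apply: ereal_inf_lbound; exists y.
    exact: dadde_le_fin.
  have [l [lc lb]] := @core_sep R Y h g a h0 g0 y0 hC gC hy0' gy0' gc0 Ha.
  apply: le_trans (_ : _ <= (ereal_sup (range (fun y => (l y)%:E + - h y)) + mdconj g l)%dE) _.
    by apply: ereal_inf_lbound; exists l.
  rewrite /mdconj.
  apply: (@sup_sum_le R _ _ (- a)%R (l y0 - h0)%R (- l y0 - g0)%R).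
  + by exists y0 => //; rewrite hy0'.
  + by exists y0 => //; rewrite gy0'.
  + move=> _ _ [y _ <-] [z _ <-].
    have hNy : h y != -oo := hN y; move: hNy (gN z).
    case Eh : (h y) => [hr| |]; case Eg : (g z) => [gr| |] //= _ _.
    all: try by rewrite ?leNye.
    rewrite lee_fin; have := lb y z hr gr; rewrite Eh Eg => /(_ (lexx _) (lexx _)).
    lra.
Qed.
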